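(* Let $q$ be a prime power, let $n,k$ be integers with $3\le k\le n-2\le q-2$, and let $h=(k-1)+r$ with $1\le r\le k-2$. Let $\alpha_1,\dots,\alpha_n\in\mathbb{F}_q$ be pairwise distinct, let $G_{h,k}$ be the $k\times n$ matrix whose rows are $(\alpha_1^{e},\dots,\alpha_n^{e})$ for $e=0,1,\dots,k-2$ and $e=h$, let $\mathbf v=(v_1,\dots,v_n)\in(\mathbb{F}_q^* )^n$ and let $C_{h,\mathbf v}$ be the linear code generated by $G_{h,k}\cdot\mathrm{diag}(v_1,\dots,v_n)$. Let $u_i=\prod_{j\ne i}(\alpha_i-\alpha_j)^{-1}$ and $S_t=S_t(\alpha_1,\dots,\alpha_n)$. Then $C_{h,\mathbf v}$ is self-orthogonal if and only if there exists a polynomial $f(x)=\sum_{j=0}^{n-2k-r+1}f_jx^j\in\mathbb{F}_q[x]$ such that (1) $v_i^2=u_if(\alpha_i)$ for all $1\le i\le n$, and (2) $\sum_{j=s}^{s+r}f_jS_{j-s}=0$, where $s=n-2k-2r+1$ and $f_j=0$ for $j<0$.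
   Context: Convention: $0^0=1$. $S_t(x_1,\dots,x_m)=\sum_{t_1+\dots+t_m=t,\ t_i\ge0}x_1^{t_1}\cdots x_m^{t_m}$ is the complete homogeneous symmetric polynomial of degree $t$ ($S_0=1$). A linear code $C$ is self-orthogonal if $C\subseteq C^\perp$ (Euclidean dual). *)

(* Defs.v *)
From HB Require Import structures.
From mathcomp Require Import all_boot all_order all_algebra.
Set Implicit Arguments. Unset Strict Implicit. Unset Printing Implicit Defensive.
Import Order.TTheory GRing.Theory Num.Theory.
Local Open Scope ring_scope.

Definition complete_hom (F : fieldType) (n : nat) (alpha : 'I_n -> F) (t : nat) : F :=
  \sum_(e : {ffun 'I_n -> 'I_t.+1} | (\sum_(i < n) (e i : nat))%N == t)
     \prod_(i < n) alpha i ^+ e i.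

Definition gexp (k h : nat) (i : nat) : nat := if (i < k.-1)%N then i else h.

Definition Ghv (F : fieldType) (n k h : nat) (alpha v : 'I_n -> F) : 'M[F]_(k, n) :=
  \matrix_(i < k, j < n) (alpha j ^+ gexp k h i * v j).

(* The code generated by M is its row space; self-orthogonal: C \subseteq C^perp
   (Euclidean), i.e. any two codewords have zero Euclidean inner product. *)
Definition self_orthogonal (F : fieldType) (k n : nat) (M : 'M[F]_(k, n)) : Prop :=
  forall x y : 'rV[F]_n, (x <= M)%MS -> (y <= M)%MS -> x *m y^T = 0.

Definition uvec (F : fieldType) (n : nat) (alpha : 'I_n -> F) (i : 'I_n) : F :=
  \prod_(j < n | j != i) (alpha i - alpha j)^-1.

Definition coefz (F : fieldType) (f : {poly F}) (z : int) : F :=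
  match z with Posz m => f`_m | Negz _ => 0 end.

(* Main.v *)
Require Import Defs.
From HB Require Import structures.
From mathcomp Require Import all_boot all_order all_algebra.
From mathcomp Require Import zify ring.
Import Order.TTheory GRing.Theory Num.Theory.
Local Open Scope ring_scope.

Module Helpers.
Set Implicit Arguments. Unset Strict Implicit. Unset Printing Implicit Defensive.
Section Gen.
Variable F : fieldType.

Definition cu (m : nat) (p q : {poly F}) := forall i, (i <= m)%N -> p`_i = q`_i.

Lemma cuM m p p' q q' : cu m p p' -> cu m q q' -> cu m (p*q) (p'*q').
Proof.
move=> hp hq i hi; rewrite !coefM; apply: eq_bigr => j _.
have hj : (j <= m)%N by apply: leq_trans hi; rewrite -ltnS.
have hij : (i - j <= m)%N by apply: leq_trans (leq_subr _ _) hi.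
by rewrite hp // hq.
Qed.

Lemma cu_prod m (I : finType) (F1 F2 : I -> {poly F}) :
  (forall i, cu m (F1 i) (F2 i)) -> cu m (\prod_i F1 i) (\prod_i F2 i).
Proof.
move=> h; apply: (big_ind2 (cu m)) => //; last by move=> *; exact: cuM.
Qed.

Definition geo (c : F) T : {poly F} := \sum_(e < T.+1) (c%:P * 'X)^+e.

Lemma coef_geo c T i : (geo c T)`_i = if (i <= T)%N then c ^+ i else 0.
Proof.
rewrite /geo coef_sum.
under eq_bigr => e _ do rewrite exprMn -polyC_exp coefCM coefXn.
case: ifP => hi.
  rewrite (bigD1 (Ordinal (hi : (i < T.+1)%N))) //= eqxx mulr1 big1 ?addr0 //.
  move=> j /eqP hj; case: eqP; rewrite ?mulr0 // => e.
  by exfalso; apply: hj; apply: val_inj.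
rewrite big1 // => j _; case: eqP; rewrite ?mulr0 // => e.
by move: hi; rewrite e -ltnS ltn_ord.
Qed.

Variable n : nat.
Variable a : 'I_n -> F.

Definition Gp T : {poly F} := \prod_(j < n) geo (a j) T.

Lemma Gstable m T : (m <= T)%N -> cu m (Gp T) (Gp m).
Proof.
move=> hm; apply: cu_prod => j i hi; rewrite !coef_geo hi.
by rewrite (leq_trans hi hm).
Qed.

Lemma Gcoef t : (Gp t)`_t = complete_hom a t.
Proof.
rewrite /Gp /geo bigA_distr_bigA coef_sum /complete_hom [RHS]big_mkcond /=.
apply: eq_bigr => f _.
rewrite (eq_bigr (fun i => ((a i) ^+ (f i))%:P * 'X^(f i))); last first.
  by move=> i _; rewrite exprMn polyC_exp.
rewrite big_split /= -rmorph_prod prodrXr coefCM coefXn eq_sym.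
by case: eqP; rewrite ?mulr1 ?mulr0.
Qed.

Definition Ep : {poly F} := \prod_(j < n) (1 - (a j)%:P * 'X).

Lemma EG T : cu T (Ep * Gp T) 1.
Proof.
rewrite /Ep /Gp -big_split /=.
have := @cu_prod T _ (fun j => (1 - (a j)%:P * 'X) * geo (a j) T) (fun _ => 1).
rewrite big1_eq; apply => j i hi.
rewrite /geo -opprB mulNr -subrX1 opprB coefB coef1.
rewrite exprMn -polyC_exp coefCM coefXn.
rewrite (_ : (i == T.+1) = false) ?mulr0 ?subr0 //.
by apply/negbTE; rewrite neq_ltn ltnS hi.
Qed.

Lemma SumES t : (1 <= t)%N ->
  \sum_(i < t.+1) Ep`_i * complete_hom a (t - i) = 0.
Proof.
move=> ht; have := @EG t t (leqnn t); rewrite coef1 coefM.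
rewrite (_ : (t == 0%N) = false); last by case: t ht.
move=> h; rewrite -[RHS](_ : (false%:R : F) = 0) // -h; apply: eq_bigr => i _.
by rewrite -Gcoef (Gstable (leq_subr i t)).
Qed.
End Gen.
Section Rev.
Variable F : fieldType.

Definition Pp n (a : 'I_n -> F) : {poly F} := \prod_(j < n) ('X - (a j)%:P).

Lemma size_ie n : size (index_enum 'I_n) = n.
Proof. by rewrite -(filter_predT (index_enum _)) deprecated_filter_index_enum -cardE card_ord. Qed.

Lemma size_Pp n (a : 'I_n -> F) : size (Pp a) = n.+1.
Proof. by rewrite /Pp size_prod_XsubC size_ie. Qed.

Lemma revE n (a : 'I_n -> F) i :
  (Ep a)`_i = if (i <= n)%N then (Pp a)`_(n - i) else 0.
Proof.
elim: n a i => [|n IH] a i.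
  rewrite /Ep /Pp !big_ord0 coef1; case: i => [|i] //=; by rewrite coefC.
rewrite /Ep /Pp !big_ord_recr /=.
set c := a ord_max.
set a' := fun j : 'I_n => a (widen_ord (leqnSn n) j).
have IH' := IH a'; rewrite /Ep /Pp in IH'.
set Q := \prod_(i < n) (1 - (a (widen_ord (leqnSn n) i))%:P * 'X) in IH' *.
set P := \prod_(i < n) ('X - (a (widen_ord (leqnSn n) i))%:P) in IH' *.
have hP : forall m, (n < m)%N -> P`_m = 0.
  by move=> m hm; apply: nth_default; have := size_Pp a'; rewrite /Pp => ->.
rewrite mulrBr mulr1 mulrCA coefB coefCM coefMX.
rewrite mulrBr [P * c%:P]mulrC coefB coefCM coefMX.
case: i => [|i] /=.
  by rewrite mulr0 subr0 IH' leq0n !subn0 (hP n.+1 (ltnSn n)) mulr0 subr0.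
rewrite !IH' ltnS.
case: (ltngtP i n) => hin.
- have -> : (n.+1 - i.+1 = n - i)%N by lia.
  have -> : (n - i == 0)%N = false by lia.
  by have -> : (n - i).-1 = (n - i.+1)%N by lia.
- by rewrite mulr0 subr0.
- by rewrite hin subnn /= subnn.
Qed.
End Rev.
Section HC.
Variable F : fieldType.
Variable n : nat.
Variable a : 'I_n -> F.
Hypothesis ha : injective a.

Definition Dl l := \prod_(j < n | j != l) (a l - a j).
Definition Ll l : {poly F} := \prod_(j < n | j != l) ('X - (a j)%:P).
Definition hh N := \sum_(l < n) uvec a l * a l ^+ N.
Definition cc N := if (n <= N.+1)%N then complete_hom a (N.+1 - n) else 0.

Lemma Dl_neq0 l : Dl l != 0.
Proof.
apply/prodf_neq0 => j hj; rewrite subr_eq0; apply: contra hj => /eqP/ha ->.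
by rewrite eqxx.
Qed.

Lemma uD l : uvec a l * Dl l = 1.
Proof. by rewrite /uvec prodfV mulVf // Dl_neq0. Qed.

Lemma Ll_eval l i : (Ll l).[a i] = if i == l then Dl l else 0.
Proof.
rewrite /Ll horner_prod; under eq_bigr => j _ do rewrite hornerXsubC.
case: eqP => [->|/eqP hil] //.
by rewrite (bigD1 i) //= subrr mul0r.
Qed.

Lemma size_Ll l : size (Ll l) = n.
Proof.
rewrite /Ll -big_filter size_prod_XsubC.
rewrite deprecated_filter_index_enum -cardE.
rewrite (_ : #|_| = #|predC1 l|); last by apply: eq_card.
by rewrite cardC1 card_ord; case: n l => [[]|].
Qed.

Lemma lead_Ll l : (Ll l)`_n.-1 = 1.
Proof.
have := lead_coef_prod_XsubC (index_enum 'I_n) (fun j => j != l) a.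
by rewrite lead_coefE -/(Ll l) size_Ll.
Qed.

Lemma Lag N : (N < n)%N -> hh N = (N == n.-1)%:R.
Proof.
move=> hN.
set q := \sum_(l < n) (uvec a l * a l ^+ N) *: Ll l.
have e : 'X^N - q = 0.
  apply: (roots_geq_poly_eq0 (rs := map a (enum 'I_n))).
  - apply/allP => x /mapP [i _ ->]; rewrite /root hornerD hornerN hornerXn.
    rewrite /q horner_sum (bigD1 i) //= hornerZ Ll_eval eqxx big1.
      by rewrite addr0 mulrAC uD mul1r subrr.
    by move=> j /negbTE hj; rewrite hornerZ Ll_eval eq_sym hj mulr0.
  - by rewrite map_inj_uniq ?enum_uniq.
  - rewrite size_map size_enum_ord; apply/leq_sizeP => j hj.
    rewrite coefB coefXn coef_sum big1.
      by rewrite subr0 (_ : (j == N) = false) //; apply/negbTE; rewrite neq_ltn (leq_trans hN hj) orbT.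
    move=> l _; rewrite coefZ nth_default ?mulr0 //.
    by rewrite size_Ll.
have : ('X^N : {poly F})`_n.-1 = q`_n.-1 by apply/eqP; rewrite -subr_eq0 -coefB e coef0.
rewrite coefXn eq_sym => ->.
rewrite /q coef_sum; apply: eq_bigr => l _.
by rewrite coefZ lead_Ll mulr1.
Qed.

Lemma Pp_root l : (Pp a).[a l] = 0.
Proof.
rewrite /Pp horner_prod (bigD1 l) //= hornerXsubC subrr mul0r //.
Qed.

Lemma H2 N : \sum_(i < n.+1) (Pp a)`_i * hh (N + i) = 0.
Proof.
rewrite /hh.
under eq_bigr => i _ do rewrite mulr_sumr.
rewrite exchange_big /=; apply: big1 => l _.
have := Pp_root l; rewrite (horner_coef_wide _ (eq_leq (size_Pp a))) => h0.
transitivity (uvec a l * a l ^+ N * \sum_(i < n.+1) (Pp a)`_i * a l ^+ i); last by rewrite h0 mulr0.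
rewrite mulr_sumr; apply: eq_bigr => i _; rewrite exprD; ring.
Qed.

Lemma S0 : complete_hom a 0 = 1.
Proof.
rewrite -Gcoef /Gp /geo.
under eq_bigr => j _ do rewrite big_ord1 expr0.
by rewrite big1_eq coef1.
Qed.

Lemma C1 N : (N < n)%N -> cc N = (N == n.-1)%:R.
Proof.
move=> hN; rewrite /cc.
case: (leqP n N.+1) => h.
  have e : N = n.-1 by lia.
  by rewrite e eqxx (_ : (n.-1.+1 - n = 0)%N) ?S0 //; lia.
by rewrite (_ : (N == n.-1) = false) //; lia.
Qed.

Lemma C2 N : \sum_(i < n.+1) (Pp a)`_i * cc (N + i) = 0.
Proof.
set G := fun i : nat => (Ep a)`_i * (if (i <= N.+1)%N then complete_hom a (N.+1 - i) else 0).
have e1 : \sum_(i < n.+1) (Pp a)`_i * cc (N + i) = \sum_(i < n.+1) G i.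
  rewrite (reindex_inj rev_ord_inj) /=; apply: eq_bigr => i _.
  rewrite subSS /G revE -ltnS ltn_ord.
  rewrite /cc; congr (_ * _).
  case: (leqP i N.+1) => hi.
    rewrite (_ : (n <= (N + (n - i)).+1)%N); last by have := ltn_ord i; lia.
    by congr complete_hom; have := ltn_ord i; lia.
  by rewrite (_ : (n <= (N + (n - i)).+1)%N = false) //; have := ltn_ord i; lia.
have e2 : \sum_(i < N.+2) (Ep a)`_i * complete_hom a (N.+1 - i) = \sum_(i < N.+2) G i.
  by apply: eq_bigr => i _; rewrite /G -ltnS ltn_ord.
have hw1 : (n.+1 <= n + N.+2)%N by lia.
have hw2 : (N.+2 <= n + N.+2)%N by lia.
rewrite e1 -[RHS](SumES a (ltn0Sn N)) e2.
rewrite (big_ord_widen _ G hw1) (big_ord_widen _ G hw2) !big_mkcond /=.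
rewrite [RHS]big_mkcond; apply: eq_bigr => i _.
case: ifP => h1; case: ifP => h2 //.
  by rewrite /G (_ : (i <= N.+1)%N = false) ?mulr0 //; lia.
by rewrite /G revE (_ : (i <= n)%N = false) ?mul0r //; lia.
Qed.

Lemma hc N : hh N = cc N.
Proof.
elim/ltn_ind: N => N IH.
case: (ltnP N n) => hN; first by rewrite Lag // C1.
have -> : N = ((N - n) + n)%N by lia.
set M := (N - n)%N.
have e1 := H2 M; have e2 := C2 M.
rewrite big_ord_recr /= in e1; rewrite big_ord_recr /= in e2.
have mon : (Pp a)`_n = 1.
  by have := lead_coef_prod_XsubC (index_enum 'I_n) xpredT a; rewrite lead_coefE -/(Pp a) size_Pp.
rewrite mon mul1r in e1; rewrite mon mul1r in e2.
have eS : \sum_(i < n) (Pp a)`_i * hh (M + i) = \sum_(i < n) (Pp a)`_i * cc (M + i).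
  by apply: eq_bigr => i _; rewrite IH //; rewrite /M; have := ltn_ord i; lia.
apply: (@addrI _ (\sum_(i < n) (Pp a)`_i * cc (M + i))).
by rewrite -[in LHS]eS e1 e2.
Qed.
End HC.
Lemma tele (F : fieldType) (q : {poly F}) c b d :
  q`_b - q`_(b + d) * c ^+ d =
  \sum_(b.+1 <= i < (b + d).+1) (q * ('X - c%:P))`_i * c ^+ (i - b.+1).
Proof.
elim: d => [|d IH].
  by rewrite addn0 big_geq // expr0 mulr1 subrr.
rewrite addnS big_nat_recr /=; last by lia.
rewrite -IH mulrBr [q * c%:P]mulrC coefB coefMX coefCM /=.
rewrite (_ : ((b + d).+1 - b.+1 = d)%N); last by lia.
rewrite exprS; ring.
Qed.

Section Fwd.
Variable F : fieldType.
Variable n : nat.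
Variable a : 'I_n -> F.
Hypothesis ha : injective a.

Lemma Pp_split l : Pp a = Ll a l * ('X - (a l)%:P).
Proof. by rewrite /Pp (bigD1 l) //= mulrC. Qed.

Lemma coef_Ll l b : (b < n)%N ->
  (Ll a l)`_b = \sum_(b.+1 <= i < n.+1) (Pp a)`_i * a l ^+ (i - b.+1).
Proof.
move=> hb; have := tele (Ll a l) (a l) b (n - b).
rewrite (_ : (b + (n - b) = n)%N); last by lia.
rewrite -Pp_split => <-.
by rewrite [(Ll a l)`_n]nth_default ?size_Ll // mul0r subr0.
Qed.

Variable w : 'I_n -> F.
Variable m : nat.
Hypothesis hm : (m <= n)%N.
Hypothesis hP : forall e, (e < m)%N -> \sum_(l < n) w l * a l ^+ e = 0.

Definition fw : {poly F} := \sum_(l < n) w l *: Ll a l.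

Lemma fw_eval i : fw.[a i] = w i * Dl a i.
Proof.
rewrite /fw horner_sum (bigD1 i) //= hornerZ Ll_eval eqxx big1 ?addr0 //.
by move=> j /negbTE hj; rewrite hornerZ Ll_eval eq_sym hj mulr0.
Qed.

Lemma size_fw : (size fw <= n - m)%N.
Proof.
apply/leq_sizeP => j hj; rewrite /fw coef_sum.
case: (ltnP j n) => hjn; last first.
  by apply: big1 => l _; rewrite coefZ nth_default ?mulr0 // size_Ll.
under eq_bigr => l _ do rewrite coefZ coef_Ll // mulr_sumr.
rewrite exchange_big /=; apply: big1_seq => i /andP [_ hi].
rewrite mem_index_iota in hi.
under eq_bigr => l _ do rewrite mulrCA.
rewrite -mulr_sumr hP ?mulr0 //; lia.
Qed.
End Fwd.
Section KI.
Variable F : fieldType.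
Variable n k r : nat.
Variable a : 'I_n -> F.
Hypothesis hk : (2 * k + r - 2 <= n)%N.
Hypothesis hk1 : (1 <= k)%N.
Variable f : {poly F}.
Hypothesis hf : (size f <= n - (2 * k + r - 2))%N.

Let E2 := (2 * (k.-1 + r))%N.
Let s : int := (n%:Z - 2 * k%:Z - 2 * r%:Z + 1)%R.

Lemma KI : \sum_(j < n) f`_j * cc a (j + E2) =
  \sum_(m0 < r.+1) coefz f (s + m0%:Z)%R * complete_hom a m0.
Proof.
pose I (j m0 : nat) : F := (j%:Z == s + m0%:Z)%:R.
transitivity (\sum_(j < n) \sum_(m0 < r.+1) I j m0 * (f`_j * complete_hom a m0)).
  apply: eq_bigr => j _.
  case: (ltnP j (size f)) => hj; last first.
    rewrite nth_default // mul0r big1 // => m0 _; by rewrite mul0r mulr0.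
  rewrite /cc; case: (leqP n (j + E2).+1) => hn.
    have hm1 : ((j + E2).+1 - n < r.+1)%N by rewrite /E2; lia.
    rewrite (bigD1 (Ordinal hm1)) //= big1.
      rewrite addr0 /I (_ : (j%:Z == s + ((j + E2).+1 - n)%N%:Z) = true) ?mul1r //.
      by apply/eqP; rewrite /s /E2; lia.
    move=> m0 hne; rewrite /I (_ : (j%:Z == s + m0%:Z) = false) ?mul0r //.
    apply/negbTE/eqP => e; move/eqP: hne; apply; apply: val_inj => /=.
    by move: e; rewrite /s /E2; lia.
  rewrite mulr0 big1 // => m0 _.
  rewrite /I (_ : (j%:Z == s + m0%:Z) = false) ?mul0r //.
  by apply/negbTE/eqP; rewrite /s /E2; lia.
rewrite exchange_big /=; apply: eq_bigr => m0 _.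
case E: (s + m0%:Z)%R => [j0|j0] /=.
  have hj0 : (j0 < n)%N by move: E; rewrite /s; have := ltn_ord m0; lia.
  rewrite (bigD1 (Ordinal hj0)) //= big1.
    by rewrite addr0 /I E eqxx mul1r.
  move=> j hne; rewrite /I E (_ : (j%:Z == Posz j0) = false) ?mul0r //.
  apply/negbTE/eqP => e; move/eqP: hne; apply; apply: val_inj => /=.
  by move: e; lia.
rewrite mul0r big1 // => j _; rewrite /I E (_ : (j%:Z == Negz j0) = false) ?mul0r //.
Qed.
End KI.
Lemma hsum (F : fieldType) n (a : 'I_n -> F) (ha : injective a) (f : {poly F}) e :
  (size f <= n)%N ->
  \sum_(l < n) (uvec a l * f.[a l]) * a l ^+ e = \sum_(j < n) f`_j * cc a (j + e).
Proof.
move=> hf.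
under eq_bigr => l _ do rewrite (horner_coef_wide _ hf) mulr_sumr mulr_suml.
rewrite exchange_big /=; apply: eq_bigr => j _.
rewrite -(hc ha) /hh mulr_sumr; apply: eq_bigr => l _.
rewrite exprD; ring.
Qed.

Lemma exps (F : fieldType) (P : nat -> F) k r : (3 <= k)%N -> (1 <= r)%N -> (r + 2 <= k)%N ->
  (forall i j : 'I_k, P (gexp k (k.-1 + r) i + gexp k (k.-1 + r) j) = 0) <->
  ((forall e, (e < 2 * k + r - 2)%N -> P e = 0) /\ P (2 * (k.-1 + r))%N = 0).
Proof.
move=> hk hr1 hr2; have hk1 : (k.-1 < k)%N by lia.
split.
  move=> H; split.
    move=> e he.
    have [i [j <-]] : exists i j : 'I_k, (gexp k (k.-1 + r) i + gexp k (k.-1 + r) j)%N = e.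
      case: (leqP (k.-1 + r) e) => h1.
        have hj : (e - (k.-1 + r) < k)%N by lia.
        exists (Ordinal hk1), (Ordinal hj); rewrite /gexp /= ltnn.
        case: ifP; lia.
      pose a0 := if (e < k.-1)%N then e else (k - 2)%N.
      have ha0 : (a0 < k)%N by rewrite /a0; case: ifP; lia.
      have hb0 : (e - a0 < k)%N by rewrite /a0; case: ifP; lia.
      exists (Ordinal ha0), (Ordinal hb0); rewrite /gexp /=.
      rewrite /a0; case: (ltnP e k.-1) => h2 /=.
        have h0 : (0 < k.-1)%N by lia.
        by rewrite h2 subnn h0 addn0.
      have hA : (k - 2 < k.-1)%N by lia.
      have hB : (e - (k - 2) < k.-1)%N by lia.
      rewrite hA hB; lia.
    exact: H.
  have := H (Ordinal hk1) (Ordinal hk1); rewrite /gexp /= ltnn.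
  by move=> <-; congr P; lia.
move=> [H1 H2] i j; rewrite /gexp.
case: ifP => hi; case: ifP => hj.
- apply: H1; have := ltn_ord i; have := ltn_ord j; lia.
- apply: H1; have := ltn_ord i; have := ltn_ord j; lia.
- apply: H1; have := ltn_ord i; have := ltn_ord j; lia.
- by rewrite -H2; congr P; lia.
Qed.

Lemma so_iff (F : fieldType) k n (M : 'M[F]_(k, n)) :
  self_orthogonal M <-> (forall i j, \sum_(l < n) M i l * M j l = 0).
Proof.
split.
  move=> H i j; have := H (row i M) (row j M) (row_sub i M) (row_sub j M).
  move/matrixP => /(_ 0 0); rewrite !mxE => h; rewrite -[RHS]h.
  by apply: eq_bigr => l _; rewrite !mxE.
move=> H x y /submxP [D ->] /submxP [E ->].
have e0 : M *m M^T = 0.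
  apply/matrixP => i j; rewrite !mxE -[RHS](H i j).
  by apply: eq_bigr => l _; rewrite mxE.
by rewrite trmx_mul -mulmxA (mulmxA M) e0 mul0mx mulmx0.
Qed.
End Helpers.
Import Helpers.

Lemma zt : forall n k r sz : nat, (sz <= n - (2 * k + r - 2))%N -> (2 * k + r - 2 <= n)%N -> (2 < k)%N -> ((sz)%:Z <= n%:Z - 2 * k%:Z - r%:Z + 2)%R.
Proof. move=> n k r sz h1 h2 h3. lia. Qed.

Theorem theorem4p11 (F : finFieldType) (n k r : nat)
  (alpha v : 'I_n -> F)
  (hk3 : (3 <= k)%N) (hkn : (k + 2 <= n)%N) (hnq : (n <= #|F|)%N)
  (hr1 : (1 <= r)%N) (hr2 : (r + 2 <= k)%N)
  (halpha : injective alpha) (hv : forall i, v i != 0) :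
  let h := (k.-1 + r)%N in
  let s : int := (n%:Z - 2 * k%:Z - 2 * r%:Z + 1)%R in
  self_orthogonal (@Ghv F n k h alpha v)
  <->
  exists f : {poly F},
    ((size f)%:Z <= n%:Z - 2 * k%:Z - r%:Z + 2)%R /\
    (forall i : 'I_n, v i ^+ 2 = uvec alpha i * f.[alpha i]) /\
    \sum_(m < r.+1) coefz f (s + m%:Z)%R * complete_hom alpha m = 0.
Proof.
move=> h s.
pose Pw e := \sum_(l < n) v l ^+ 2 * alpha l ^+ e.
have hM : forall i j, \sum_(l < n) (@Ghv F n k h alpha v) i l * (@Ghv F n k h alpha v) j l
   = Pw (gexp k h i + gexp k h j)%N.
  by move=> i j; apply: eq_bigr => l _; rewrite !mxE exprD; ring.
rewrite so_iff.
have -> : (forall i j, \sum_(l < n) (@Ghv F n k h alpha v) i l * (@Ghv F n k h alpha v) j l = 0)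
   <-> (forall i j : 'I_k, Pw (gexp k (k.-1 + r) i + gexp k (k.-1 + r) j)%N = 0).
  by split => H i j; [rewrite -hM | rewrite hM]; apply: H.
rewrite (exps Pw hk3 hr1 hr2).
have hk1 : (0 < k)%N by lia.
have Pw_eq : forall (f : {poly F}) e, (forall i : 'I_n, v i ^+ 2 = uvec alpha i * f.[alpha i]) ->
    (size f <= n)%N -> Pw e = \sum_(j < n) f`_j * cc alpha (j + e).
  move=> f e hv2 hfn; rewrite -(hsum halpha e hfn) /Pw.
  by apply: eq_bigr => l _; rewrite hv2.
split.
- move=> [H1 H2].
  pose w := fun l => v l ^+ 2.
  pose m' := minn (2 * k + r - 2) n.
  have hm' : (m' <= n)%N by rewrite /m' geq_minr.
  have hP : forall e, (e < m')%N -> \sum_(l < n) w l * alpha l ^+ e = 0.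
    by move=> e he; apply: H1; move: he; rewrite /m'; lia.
  have hsz := size_fw hm' hP.
  have hv2 : forall i : 'I_n, v i ^+ 2 = uvec alpha i * (fw alpha w).[alpha i].
    by move=> i; rewrite fw_eval mulrCA uD // mulr1.
  have hmn : (2 * k + r - 2 <= n)%N.
    case: (leqP (2 * k + r - 2) n) => // hlt.
    have hn0 : (0 < n)%N by lia.
    have : size (fw alpha w) = 0%N by move: hsz; rewrite /m'; lia.
    move/eqP; rewrite size_poly_eq0 => /eqP f0.
    have := hv2 (Ordinal hn0); rewrite f0 horner0 mulr0 => /eqP.
    by rewrite expf_eq0 /= (negbTE (hv _)).
  have hsz' : (size (fw alpha w) <= n - (2 * k + r - 2))%N by move: hsz; rewrite /m'; lia.
  exists (fw alpha w); split; first exact: zt hsz' hmn hk3.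
  split; first exact: hv2.
  rewrite /s -(KI alpha hmn hk1 hsz') -[RHS]H2 (Pw_eq _ _ hv2) //.
  by apply: leq_trans hsz (leq_subr _ _).
- move=> [f [hsz [hv2 hsum0]]].
  have hmn : (2 * k + r - 2 <= n)%N by lia.
  have hsz' : (size f <= n - (2 * k + r - 2))%N by lia.
  have hfn : (size f <= n)%N by lia.
  split.
    move=> e he; rewrite (Pw_eq _ _ hv2 hfn); apply: big1 => j _.
    case: (ltnP j (size f)) => hj; last by rewrite nth_default // mul0r.
    by rewrite /cc (_ : (n <= (j + e).+1)%N = false) ?mulr0 //; lia.
  by rewrite (Pw_eq _ _ hv2 hfn) (KI alpha hmn hk1 hsz').
Qed.
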